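(* Let $\gamma>2$, $\beta_c>0$ and $a=\gamma-1$. For $\mu>0$ define $$R(\mu)=\frac{e^{\beta_c\mu}}{4\sinh^2(a\beta_c\mu/2)}\Big(e^{a\beta_c\mu}F_a(-e^{\beta_c\mu})-2F_a(-1)+e^{-a\beta_c\mu}F_a(-e^{-\beta_c\mu})\Big),$$ where $F_a(w)={}_3F_2(1,a,a;1+a,1+a;w)$. Then $$\lim_{\mu\to\infty}R(\mu)=\left(\frac{\gamma-1}{\gamma-2}\right)^2 .$$ Equivalently, for the Type A model with cut-off $\mu$ at the temperature $T=T_c=1/\beta_c$ (so $\alpha=\gamma-1$), $\dfrac{2L_g}{N(N-1)}\,e^{\beta_c\mu}\to\left(\frac{\gamma-1}{\gamma-2}\right)^2$ as $\mu\to\infty$. *)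

(* Defs.v *)
From Stdlib Require Import Reals.
From Coquelicot Require Import Coquelicot.
Open Scope R_scope.

(* F_a(w) = 3F2(1,a,a;1+a,1+a;w).  Since (1)_n/n! = 1 and (a)_n/(1+a)_n = a/(a+n),
   the hypergeometric series is  a^2 * sum_n w^n/(n+a)^2  for |w|<1.  Its (principal
   branch) analytic continuation to w in C \ [1,oo) is given by the integral
   representation  a^2 * int_0^1 t^(a-1) (-ln t) / (1 - w t) dt
   (use 1/(n+a)^2 = int_0^1 t^(n+a-1)(-ln t) dt).  We only need w <= 0.
   For a > 1 the integrand is continuous on [0,1] (value 0 at t = 0 with the
   Stdlib conventions ln 0 = 0, Rpower 0 _ = 1), so the Riemann integral is proper. *)
Definition F3F2 (a w : R) : R :=
  a ^ 2 * RInt (fun t => Rpower t (a - 1) * (- ln t) / (1 - w * t)) 0 1.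

Definition Rmu (gamma beta_c mu : R) : R :=
  let a := gamma - 1 in
  exp (beta_c * mu) / (4 * (sinh (a * beta_c * mu / 2)) ^ 2) *
  (exp (a * beta_c * mu) * F3F2 a (- exp (beta_c * mu))
   - 2 * F3F2 a (-1)
   + exp (- (a * beta_c * mu)) * F3F2 a (- exp (- (beta_c * mu)))).

(* Main.v *)
Require Import Defs.
From Stdlib Require Import Reals Lra.
From Coquelicot Require Import Coquelicot.
Open Scope R_scope.


Lemma expl (x y : R) : x <= y -> exp x <= exp y.
Proof. intros H; destruct (Rle_lt_or_eq_dec _ _ H) as [H1|H1];
  [left; apply exp_increasing; auto | subst; lra]. Qed.

Lemma ln_nonpos (t : R) : t <= 0 -> ln t = 0.
Proof. intros H; unfold Rpower.ln; destruct (Rlt_dec 0 t) as [h|h]; [exfalso; lra|reflexivity]. Qed.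

Definition ff (c t : R) := Rpower t c * (- ln t).
Definition kk (c w t : R) := Rpower t c * (- ln t) / (1 - w * t).
Definition hh (c t : R) := ff c t / t.
Definition Phi (c t : R) := Rpower t c * (- ln t / c + / (c * c)).

Lemma ff_le0 c t : t <= 0 -> ff c t = 0.
Proof. intros H; unfold ff; rewrite ln_nonpos; auto; ring. Qed.

Lemma ln_bound t d : 0 < t -> 0 < d -> d * (- ln t) <= exp (- d * ln t) - 1.
Proof. intros Ht Hd. pose proof (exp_ineq1_le (- d * ln t)). lra. Qed.

Lemma ln_le0 t : 0 < t -> t <= 1 -> ln t <= 0.
Proof. intros; rewrite <- ln_1; apply ln_le; auto. Qed.

Lemma ff_bounds c t : 0 < c -> 0 <= t <= 1 -> 0 <= ff c t <= / c.
Proof.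
  intros Hc [H0 H1]. destruct (Rle_lt_or_eq_dec _ _ H0) as [Ht|Ht].
  2:{ subst; rewrite ff_le0; [|lra]. split; [lra|]. left; apply Rinv_0_lt_compat; auto. }
  pose proof (ln_le0 t Ht H1) as HL.
  pose proof (ln_bound t c Ht Hc) as Hb.
  unfold ff, Rpower. set (L := ln t) in *.
  assert (E1 : exp (c * L) * exp (- c * L) = 1).
  { rewrite <- exp_plus. replace (c * L + - c * L) with 0 by ring. apply exp_0. }
  pose proof (exp_pos (c * L)). pose proof (exp_pos (- c * L)).
  split. { apply Rmult_le_pos; lra. }
  apply (Rmult_le_reg_l c); auto. rewrite Rinv_r by lra. nra.
Qed.

Lemma ff_small c t : 0 < c -> 0 < t <= 1 -> ff c t <= 2 / c * Rpower t (c / 2).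
Proof.
  intros Hc [Ht H1].
  pose proof (ln_le0 t Ht H1) as HL.
  pose proof (ln_bound t (c/2) Ht ltac:(lra)) as Hb.
  unfold ff, Rpower. set (L := ln t) in *.
  assert (E1 : exp (c / 2 * L) * exp (- (c/2) * L) = 1).
  { rewrite <- exp_plus. replace (c/2 * L + - (c/2) * L) with 0 by ring. apply exp_0. }
  assert (E2 : exp (c * L) = exp (c / 2 * L) * exp (c / 2 * L)).
  { rewrite <- exp_plus. f_equal. field. }
  rewrite E2.
  pose proof (exp_pos (c/2 * L)). pose proof (exp_pos (- (c/2) * L)).
  apply (Rmult_le_reg_l (c/2)); [lra|].
  replace (c / 2 * (2 / c * exp (c / 2 * L))) with (exp (c/2 * L)) by (field; lra).
  nra.
Qed.

Lemma rp_half c t : 0 < c -> 0 < t <= 1 -> Rpower t c <= Rpower t (c / 2).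
Proof.
  intros Hc [Ht H1]. pose proof (ln_le0 t Ht H1). unfold Rpower. apply expl. nra.
Qed.

Lemma rp_pos t c : 0 < Rpower t c.
Proof. apply exp_pos. Qed.

Lemma ff_cont_pos c t : 0 < t -> continuous (ff c) t.
Proof.
  intros Ht. apply (ex_derive_continuous (ff c)). unfold ff, Rpower. auto_derive. lra.
Qed.

Lemma small_pow c eta : 0 < c -> 0 < eta < 1 ->
  0 < Rpower eta (2 / c) < 1 /\ Rpower (Rpower eta (2 / c)) (c / 2) = eta.
Proof.
  intros Hc He. split; [split|].
  - apply exp_pos.
  - unfold Rpower. rewrite <- exp_0. apply exp_increasing.
    assert (ln eta < 0). { rewrite <- ln_1. apply ln_increasing; lra. }
    assert (0 < 2 / c) by (apply Rdiv_lt_0_compat; lra). nra.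
  - rewrite Rpower_mult. replace (2 / c * (c / 2)) with 1 by (field; lra).
    apply Rpower_1; lra.
Qed.

Lemma ff_cont0 c : 0 < c -> continuous (ff c) 0.
Proof.
  intros Hc. apply continuity_pt_filterlim.
  intros eps Heps.
  set (eta := Rmin (1/2) (eps * c / 4)).
  assert (Heta : 0 < eta < 1).
  { unfold eta. split. apply Rmin_pos; [lra|]. apply Rdiv_lt_0_compat; [nra|lra].
    apply Rle_lt_trans with (1/2); [apply Rmin_l|lra]. }
  assert (Heta2 : eta <= eps * c / 4) by apply Rmin_r.
  destruct (small_pow c eta Hc Heta) as [[Ha1 Ha2] Ha3].
  exists (Rpower eta (2 / c)). split; [auto|].
  intros x [_ Hx]. unfold R_dist in *. rewrite (ff_le0 c 0) by lra.
  change (R_dist (ff c x) 0 < eps). change (R_dist x 0 < Rpower eta (2/c)) in Hx. unfold R_dist in *. rewrite Rminus_0_r in *.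
  destruct (Rle_or_lt x 0) as [Hx0|Hx0].
  - rewrite ff_le0 by auto. rewrite Rabs_R0; auto.
  - rewrite Rabs_pos_eq in Hx by lra.
    destruct (ff_bounds c x Hc ltac:(lra)) as [F0 F1].
    rewrite Rabs_pos_eq by auto.
    apply Rle_lt_trans with (2 / c * Rpower x (c / 2)).
    + apply ff_small; lra.
    + assert (Rpower x (c/2) < eta).
      { rewrite <- Ha3. apply Rlt_Rpower_l; lra. }
      assert (0 < 2 / c) by (apply Rdiv_lt_0_compat; lra).
      apply Rlt_le_trans with (2 / c * eta). nra.
      apply Rle_trans with (2 / c * (eps * c / 4)). nra.
      replace (2 / c * (eps * c / 4)) with (eps / 2) by (field; lra); lra.
Qed.

Lemma ff_cont c t : 0 < c -> 0 <= t -> continuous (ff c) t.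
Proof. intros Hc Ht. destruct (Rle_lt_or_eq_dec _ _ Ht) as [H|H].
  apply ff_cont_pos; auto. subst; apply ff_cont0; auto. Qed.

Lemma kk_cont c w t : 0 < c -> w <= 0 -> 0 <= t -> continuous (kk c w) t.
Proof.
  intros Hc Hw Ht.
  apply (continuous_ext (fun y => mult (ff c y) (/ (1 - w * y)))).
  { intros y. unfold kk, ff, mult; simpl. reflexivity. }
  apply (continuous_mult (ff c) (fun y => / (1 - w * y))).
  - apply ff_cont; auto.
  - apply (ex_derive_continuous (fun y => / (1 - w * y))). auto_derive. nra.
Qed.

Lemma hh_cont c t : 0 < c -> 0 < t -> continuous (hh c) t.
Proof.
  intros Hc Ht.
  apply (continuous_ext (fun y => mult (ff c y) (/ y))).
  { intros y. unfold hh, mult; simpl. reflexivity. }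
  apply (continuous_mult (ff c) (fun y => / y)).
  - apply ff_cont; lra.
  - apply (ex_derive_continuous (fun y => / y)). auto_derive. lra.
Qed.

Lemma kk_int c w u v : 0 < c -> w <= 0 -> 0 <= u <= v -> ex_RInt (kk c w) u v.
Proof.
  intros Hc Hw Huv. apply (@ex_RInt_continuous R_CompleteNormedModule).
  rewrite Rmin_left, Rmax_right by lra. intros z Hz. apply kk_cont; lra.
Qed.

Lemma Phi_der c t : 0 < c -> 0 < t -> is_derive (Phi c) t (hh c t).
Proof.
  intros Hc Ht. unfold Phi, hh, ff, Rpower. auto_derive. repeat split; lra.
  field. lra.
Qed.

Lemma hh_RInt c e : 0 < c -> 0 < e <= 1 -> is_RInt (hh c) e 1 (Phi c 1 - Phi c e).
Proof.
  intros Hc He.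
  apply (is_RInt_derive (Phi c) (hh c)); rewrite Rmin_left, Rmax_right by lra;
    intros x Hx.
  - apply Phi_der; lra.
  - apply hh_cont; lra.
Qed.

Lemma Phi1 c : 0 < c -> Phi c 1 = / (c * c).
Proof. intros Hc. unfold Phi, Rpower. rewrite ln_1. rewrite Rmult_0_r, exp_0. field. lra. Qed.

Lemma Phi_bounds c e : 0 < c -> 0 < e <= 1 ->
  0 <= Phi c e <= 3 / (c * c) * Rpower e (c / 2).
Proof.
  intros Hc He.
  destruct (ff_bounds c e Hc ltac:(lra)) as [F0 F1].
  pose proof (ff_small c e Hc He) as Fs. pose proof (rp_half c e Hc He) as Rh.
  pose proof (rp_pos e c).
  assert (Phi c e = ff c e / c + Rpower e c / (c * c)) as ->.
  { unfold Phi, ff. field. lra. }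
  assert (0 < / c) by (apply Rinv_0_lt_compat; lra).
  assert (0 < / (c*c)) by (apply Rinv_0_lt_compat; nra).
  unfold Rdiv. split.
  - apply Rplus_le_le_0_compat; apply Rmult_le_pos; lra.
  - unfold Rdiv in Fs.
    replace (3 * / (c * c)) with (2 * / c * / c + / (c*c)) by (field; lra).
    assert (ff c e * / c <= 2 * / c * Rpower e (c / 2) * / c).
    { apply Rmult_le_compat_r; lra. }
    assert (Rpower e c * / (c * c) <= Rpower e (c / 2) * / (c * c)).
    { apply Rmult_le_compat_r; lra. }
    nra.
Qed.

Lemma kk_abs c w : 0 < c -> w <= 0 -> Rabs (RInt (kk c w) 0 1) <= / c.
Proof.
  intros Hc Hw.
  replace (/ c) with ((1 - 0) * / c) by ring.
  apply abs_RInt_le_const; [lra| apply kk_int; lra |].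
  intros t Ht. destruct (ff_bounds c t Hc Ht) as [F0 F1].
  unfold kk. fold (ff c t).
  assert (1 <= 1 - w * t) by nra.
  rewrite Rabs_pos_eq.
  - apply Rle_trans with (ff c t); [|auto].
    unfold Rdiv. rewrite <- (Rmult_1_r (ff c t)) at 2. apply Rmult_le_compat_l; auto.
    rewrite <- Rinv_1. apply Rinv_le_contravar; lra.
  - apply Rdiv_le_0_compat; lra.
Qed.

Lemma kk_pt c w t : 0 < c -> w <= 0 -> 0 <= t <= 1 -> 0 <= kk c w t <= / c.
Proof.
  intros Hc Hw Ht. destruct (ff_bounds c t Hc Ht) as [F0 F1].
  unfold kk. fold (ff c t).
  assert (1 <= 1 - w * t) by nra. split.
  - apply Rdiv_le_0_compat; lra.
  - apply Rle_trans with (ff c t); [|auto].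
    unfold Rdiv. rewrite <- (Rmult_1_r (ff c t)) at 2. apply Rmult_le_compat_l; auto.
    rewrite <- Rinv_1. apply Rinv_le_contravar; lra.
Qed.

Lemma kk_neg c s t : kk c (- s) t = ff c t / (1 + s * t).
Proof. unfold kk, ff. replace (1 - - s * t) with (1 + s * t) by ring. reflexivity. Qed.

Lemma split01 c s d : 0 < c -> 0 <= s -> 0 <= d <= 1 ->
  RInt (kk c (-s)) 0 1 = RInt (kk c (-s)) 0 d + RInt (kk c (-s)) d 1.
Proof.
  intros Hc Hs Hd. rewrite <- (RInt_Chasles (kk c (-s)) 0 d 1).
  reflexivity. apply kk_int; lra. apply kk_int; lra.
Qed.

Lemma hh_scal_RInt c s e : 0 < c -> 0 < e <= 1 ->
  is_RInt (fun t => scal (/ s) (hh c t)) e 1 (/ s * (Phi c 1 - Phi c e)).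
Proof.
  intros Hc He. apply (is_RInt_scal (hh c) e 1 (/ s)). apply hh_RInt; auto.
Qed.

Lemma J_upper c s : 0 < c -> 0 < s -> s * RInt (kk c (-s)) 0 1 <= / (c * c).
Proof.
  intros Hc Hs. apply Rnot_lt_le; intro H.
  set (g := s * RInt (kk c (-s)) 0 1 - / (c * c)).
  assert (Hg : 0 < g) by (unfold g; lra).
  set (d := Rmin (1/2) (g * c / (2 * s))).
  assert (Hd : 0 < d <= 1/2).
  { unfold d. split. apply Rmin_pos; [lra|]. apply Rdiv_lt_0_compat; nra. apply Rmin_l. }
  assert (Hd2 : d <= g * c / (2 * s)) by apply Rmin_r.
  pose proof (split01 c s d Hc ltac:(lra) ltac:(lra)) as E.
  assert (A1 : RInt (kk c (-s)) 0 d <= d * / c).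
  { replace (d * / c) with ((d - 0) * / c) by ring.
    eapply Rle_trans; [apply Rle_abs|].
    apply abs_RInt_le_const; [lra| apply kk_int; lra |].
    intros t Ht. destruct (kk_pt c (-s) t Hc ltac:(lra) ltac:(lra)).
    rewrite Rabs_pos_eq; auto. }
  assert (A2 : RInt (kk c (-s)) d 1 <= / s * (Phi c 1 - Phi c d)).
  { rewrite <- (is_RInt_unique _ _ _ _ (hh_scal_RInt c s d Hc ltac:(lra))).
    apply RInt_le; [lra | apply kk_int; lra | eexists; apply hh_scal_RInt; lra |].
    intros t Ht. rewrite kk_neg. unfold scal; simpl; unfold mult; simpl.
    unfold hh. destruct (ff_bounds c t Hc ltac:(lra)).
    apply Rle_trans with (ff c t / (s * t)).
    - unfold Rdiv. apply Rmult_le_compat_l; auto. apply Rinv_le_contravar; nra.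
    - right. field. lra. }
  destruct (Phi_bounds c d Hc ltac:(lra)) as [P0 _].
  rewrite Phi1 in A2 by auto.
  assert (A3 : s * (RInt (kk c (- s)) 0 d + RInt (kk c (- s)) d 1) <= s * (d * / c) + (/ (c*c) - Phi c d)).
  { rewrite Rmult_plus_distr_l. apply Rplus_le_compat.
    apply Rmult_le_compat_l; lra.
    apply Rle_trans with (s * (/ s * (/ (c * c) - Phi c d))).
    apply Rmult_le_compat_l; lra. right; field; lra. }
  assert (s * (d * / c) <= g / 2).
  { apply Rle_trans with (s * (g * c / (2 * s) * / c)).
    apply Rmult_le_compat_l; [lra|]. apply Rmult_le_compat_r; [|auto].
    left; apply Rinv_0_lt_compat; lra.
    right; field; lra. }
  rewrite <- E in A3. unfold g in *. lra.
Qed.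

Lemma J_lower c s e : 0 < c -> 0 < s -> 0 < e <= 1 ->
  / (c * c) - 3 / (c * c) * Rpower e (c / 2) - / (c * s * e * e)
  <= s * RInt (kk c (-s)) 0 1.
Proof.
  intros Hc Hs He.
  pose proof (split01 c s e Hc ltac:(lra) ltac:(lra)) as E.
  set (K := / (c * s * s * e * e)).
  assert (HK : 0 < K) by (unfold K; apply Rinv_0_lt_compat;
    repeat apply Rmult_lt_0_compat; lra).
  assert (A1 : 0 <= RInt (kk c (-s)) 0 e).
  { apply RInt_ge_0; [lra | apply kk_int; lra |].
    intros t Ht. apply (kk_pt c (-s) t); lra. }
  assert (Hm : is_RInt (fun t => minus (scal (/ s) (hh c t)) K) e 1
                 (minus (/ s * (Phi c 1 - Phi c e)) (scal (1 - e) K))).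
  { apply (is_RInt_minus (fun t => scal (/ s) (hh c t)) (fun _ => K)).
    apply hh_scal_RInt; auto. apply (@is_RInt_const R_NormedModule). }
  assert (A2 : minus (/ s * (Phi c 1 - Phi c e)) (scal (1 - e) K) <= RInt (kk c (-s)) e 1).
  { rewrite <- (is_RInt_unique _ _ _ _ Hm).
    apply RInt_le; [lra | eexists; exact Hm | apply kk_int; lra |].
    intros t Ht. rewrite kk_neg. unfold minus, plus, opp, scal; simpl; unfold mult; simpl.
    unfold hh. destruct (ff_bounds c t Hc ltac:(lra)) as [F0 F1].
    assert (Eq : / s * (ff c t / t) - ff c t / (1 + s * t)
                 = ff c t * / (t * s * (1 + s * t))) by (field; nra).
    assert (ff c t * / (t * s * (1 + s * t)) <= / c * / (s * s * e * e)).
    { apply Rmult_le_compat; [lra | left; apply Rinv_0_lt_compat; nra | lra |].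
      apply Rinv_le_contravar. repeat apply Rmult_lt_0_compat; lra.
      assert (e * e <= t * t) by nra.
      assert (s * s * (e * e) <= s * s * (t * t)) by (apply Rmult_le_compat_l; nra).
      nra. }
    assert (/ c * / (s * s * e * e) = K) by (unfold K; field; lra).
    lra. }
  unfold minus, plus, opp, scal in A2; simpl in A2; unfold mult in A2; simpl in A2.
  rewrite Phi1 in A2 by auto.
  destruct (Phi_bounds c e Hc He) as [_ P1].
  assert (s * (/ s * (/ (c * c) - Phi c e) + - ((1 - e) * K)) <= s * RInt (kk c (-s)) 0 1).
  { apply Rmult_le_compat_l; lra. }
  assert (s * (/ s * (/ (c * c) - Phi c e) + - ((1 - e) * K))
          = / (c * c) - Phi c e - (1 - e) * / (c * s * e * e)) by (unfold K; field; lra).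
  assert (0 < / (c * s * e * e)) by (apply Rinv_0_lt_compat;
    repeat apply Rmult_lt_0_compat; lra).
  nra.
Qed.

Lemma J_lim c : 0 < c ->
  is_lim (fun s => s * RInt (kk c (-s)) 0 1) p_infty (/ (c * c)).
Proof.
  intros Hc. apply is_lim_spec. intros [eps Heps]. simpl.
  set (eta := Rmin (1/2) (eps * (c * c) / 6)).
  assert (Heta : 0 < eta < 1).
  { unfold eta. split. apply Rmin_pos; [lra|]. apply Rdiv_lt_0_compat; [apply Rmult_lt_0_compat; [lra|nra]|lra].
    apply Rle_lt_trans with (1/2); [apply Rmin_l|lra]. }
  assert (Heta2 : eta <= eps * (c * c) / 6) by apply Rmin_r.
  destruct (small_pow c eta Hc Heta) as [[Ha1 Ha2] Ha3].
  set (e := Rpower eta (2 / c)) in *.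
  set (q := c * e * e).
  assert (Hq : 0 < q) by (unfold q; repeat apply Rmult_lt_0_compat; lra).
  exists (2 / (q * eps)). intros s Hs.
  assert (Hqe : 0 < 2 / (q * eps)) by (apply Rdiv_lt_0_compat; nra).
  assert (Hs0 : 0 < s) by lra.
  assert (Hsq : 2 < s * (q * eps)).
  { replace 2 with (2 / (q * eps) * (q * eps)) by (field; nra).
    apply Rmult_lt_compat_r; nra. }
  assert (B1 : / (c * s * e * e) < eps / 2).
  { replace (c * s * e * e) with (q * s) by (unfold q; ring).
    apply (Rmult_lt_reg_l (q * s)); [nra|]. rewrite Rinv_r by nra. nra. }
  assert (B2 : 3 / (c * c) * Rpower e (c / 2) <= eps / 2).
  { rewrite Ha3. apply Rle_trans with (3 / (c * c) * (eps * (c * c) / 6)).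
    apply Rmult_le_compat_l; [|auto]. apply Rdiv_le_0_compat; nra.
    right; field; lra. }
  pose proof (J_upper c s Hc Hs0). pose proof (J_lower c s e Hc Hs0 ltac:(lra)).
  apply Rabs_def1; lra.
Qed.

Lemma lim_eq f x l1 l2 : is_lim f x (Finite l1) -> l1 = l2 -> is_lim f x (Finite l2).
Proof. intros H <-; auto. Qed.

Lemma lim_mult f g x lf lg : is_lim f x (Finite lf) -> is_lim g x (Finite lg) ->
  is_lim (fun y => f y * g y) x (Finite (lf * lg)).
Proof. intros H1 H2. apply (is_lim_mult f g x lf lg H1 H2). exact I. Qed.

Lemma lim_pow2 f x l : is_lim f x (Finite l) -> is_lim (fun y => f y ^ 2) x (Finite (l ^ 2)).
Proof.
  intros H. apply (is_lim_ext (fun y => f y * f y)). intros; ring.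
  apply (lim_eq _ _ (l * l)). apply lim_mult; auto. ring.
Qed.

Lemma lim_inv f x l : is_lim f x (Finite l) -> l <> 0 -> is_lim (fun y => / f y) x (Finite (/ l)).
Proof. intros H Hl. apply (is_lim_inv f x l H). intro E; injection E; auto. Qed.

Lemma lim_exp_neg K b : 0 < K -> 0 < b ->
  is_lim (fun mu => exp (- (K * (b * mu)))) p_infty 0.
Proof.
  intros HK Hb. apply is_lim_spec. intros [eps Heps]. simpl.
  exists (- ln eps / (K * b)). intros mu Hmu.
  rewrite Rminus_0_r, Rabs_pos_eq by (left; apply exp_pos).
  rewrite <- (exp_ln eps) by auto. apply exp_increasing.
  assert (0 < K * b) by nra.
  assert (- ln eps < K * b * mu).
  { apply (Rmult_lt_reg_r (/ (K * b))). apply Rinv_0_lt_compat; auto.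
    replace (K * b * mu * / (K * b)) with mu by (field; lra). unfold Rdiv in Hmu; lra. }
  nra.
Qed.

Lemma lim_exp_p b : 0 < b -> is_lim (fun mu => exp (b * mu)) p_infty p_infty.
Proof.
  intros Hb. apply is_lim_spec. intros M. simpl. exists (M / b). intros mu Hmu.
  pose proof (exp_ineq1_le (b * mu)).
  assert (M < b * mu).
  { apply (Rmult_lt_reg_r (/ b)). apply Rinv_0_lt_compat; auto.
    replace (b * mu * / b) with mu by (field; lra). unfold Rdiv in Hmu; lra. }
  lra.
Qed.

Lemma lim_J c b : 0 < c -> 0 < b ->
  is_lim (fun mu => exp (b * mu) * RInt (kk c (- exp (b * mu))) 0 1) p_infty (/ (c * c)).
Proof.
  intros Hc Hb.
  apply (is_lim_comp (fun s => s * RInt (kk c (-s)) 0 1) (fun mu => exp (b * mu)) p_infty (/ (c*c)) p_infty).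
  apply J_lim; auto. apply lim_exp_p; auto.
  exists 0. intros; discriminate.
Qed.

Lemma lim_T c K b (g : R -> R) : 0 < c -> 0 < K -> 0 < b -> (forall mu, g mu <= 0) ->
  is_lim (fun mu => exp (- (K * (b * mu))) * RInt (kk c (g mu)) 0 1) p_infty 0.
Proof.
  intros Hc HK Hb Hg.
  apply (is_lim_le_le_loc (fun mu => (- / c) * exp (- (K * (b * mu))))
                          (fun mu => (/ c) * exp (- (K * (b * mu))))).
  - exists 0. intros mu _.
    pose proof (kk_abs c (g mu) Hc (Hg mu)).
    pose proof (Rle_abs (RInt (kk c (g mu)) 0 1)).
    pose proof (Rle_abs (- RInt (kk c (g mu)) 0 1)). rewrite Rabs_Ropp in *.
    pose proof (exp_pos (- (K * (b * mu)))). split; nra.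
  - apply (lim_eq _ _ (- / c * 0)); [|ring].
    apply lim_mult. apply is_lim_const. apply lim_exp_neg; auto.
  - apply (lim_eq _ _ (/ c * 0)); [|ring].
    apply lim_mult. apply is_lim_const. apply lim_exp_neg; auto.
Qed.

Lemma ident a b mu I1 I2 I3 : 1 < a -> 0 < b * mu ->
  exp (b * mu) / (4 * sinh (a * b * mu / 2) ^ 2) *
  (exp (a * b * mu) * (a ^ 2 * I1) - 2 * (a ^ 2 * I2) + exp (- (a * b * mu)) * (a ^ 2 * I3))
  = a ^ 2 * ((exp (b * mu) * I1 - 2 * exp (- ((a - 1) * (b * mu))) * I2
              + exp (- ((a + (a - 1)) * (b * mu))) * I3) * / (1 - exp (- (a * (b * mu)))) ^ 2).
Proof.
  intros Ha Hx.
  set (A := exp (a * b * mu / 2)). set (E := exp (b * mu)).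
  assert (HA : 1 < A).
  { unfold A. rewrite <- exp_0. apply exp_increasing. nra. }
  assert (h1 : exp (a * b * mu) = A * A).
  { unfold A. rewrite <- exp_plus. f_equal. field. }
  assert (h2 : exp (- (a * b * mu)) = / (A * A)) by (rewrite exp_Ropp, h1; auto).
  assert (h3 : exp (- (a * (b * mu))) = / (A * A)) by (rewrite <- h2; f_equal; ring).
  assert (h4 : exp (- ((a - 1) * (b * mu))) = E * / (A * A)).
  { unfold E. rewrite <- h2, <- exp_plus. f_equal. ring. }
  assert (h5 : exp (- ((a + (a - 1)) * (b * mu))) = E * / (A * A) * / (A * A)).
  { unfold E. rewrite <- h2, <- exp_plus, <- exp_plus. f_equal. ring. }
  assert (h6 : sinh (a * b * mu / 2) = (A - / A) / 2).
  { unfold sinh. rewrite exp_Ropp. reflexivity. }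
  rewrite h1, h2, h3, h4, h5, h6.
  assert (A * A - 1 <> 0) by nra.
  assert (A <> 0) by lra.
  field. auto.
Qed.
Theorem mainTheorem6 (gamma beta_c : R) (hgamma : 2 < gamma) (hbeta : 0 < beta_c) :
  is_lim (fun mu => Rmu gamma beta_c mu) p_infty
         (Finite (((gamma - 1) / (gamma - 2)) ^ 2)).
Proof.
  set (a := gamma - 1). set (c := a - 1). set (b := beta_c).
  assert (Ha : 1 < a) by (unfold a; lra). assert (Hc : 0 < c) by (unfold c; lra).
  apply (is_lim_ext_loc (fun mu => a ^ 2 * ((exp (b * mu) * RInt (kk c (- exp (b * mu))) 0 1
      - 2 * exp (- (c * (b * mu))) * RInt (kk c (-1)) 0 1
      + exp (- ((a + c) * (b * mu))) * RInt (kk c (- exp (- (b * mu)))) 0 1)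
      * / (1 - exp (- (a * (b * mu)))) ^ 2))).
  { exists 0. intros mu Hmu. unfold Rmu, F3F2. cbv zeta. fold a. unfold c, kk.
    symmetry. apply ident; auto. unfold b; nra. }
  apply (lim_eq _ _ (a ^ 2 * ((/ (c * c) - 2 * 0 * RInt (kk c (-1)) 0 1 + 0) * / (1 - 0) ^ 2))).
  2:{ unfold c, a. field. lra. }
  apply lim_mult. apply is_lim_const.
  apply lim_mult.
  - apply is_lim_plus'. apply is_lim_minus'.
    + apply lim_J; auto.
    + apply lim_mult; [|apply is_lim_const].
      apply (lim_eq _ _ (2 * 0)); [|ring]. apply lim_mult; [apply is_lim_const|].
      apply lim_exp_neg; auto.
    + apply lim_T; auto. lra. intros mu. pose proof (exp_pos (- (b * mu))). lra.
  - apply lim_inv; [|rewrite Rminus_0_r, pow1; lra].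
    apply lim_pow2. apply is_lim_minus'. apply is_lim_const. apply lim_exp_neg; auto. lra.
Qed.
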